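(* Let $D$ be the dihedral group of order 8, let $\lambda_1,\lambda_2:D\to\mathbb Z/2\mathbb Z$ be homomorphisms each with kernel isomorphic to $\mathbb Z/2\times\mathbb Z/2$, and let $D\curlywedge D=\{(u,v)\in D\times D:\lambda_1(u)=\lambda_2(v)\}$. Then $D\curlywedge D$ contains a unique abelian subgroup of order 16; this subgroup equals $\ker(\lambda_1)\times\ker(\lambda_2)$ and is isomorphic to $(\mathbb Z/2\mathbb Z)^4$. *)

(* Defs.v *)
From HB Require Import structures.
From mathcomp Require Import all_boot all_order all_algebra all_fingroup all_solvable.
Set Implicit Arguments. Unset Strict Implicit. Unset Printing Implicit Defensive.

Local Open Scope group_scope.

Definition fibprod (gT1 gT2 rT : finGroupType) (f1 : gT1 -> rT) (f2 : gT2 -> rT)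
  (A : {set gT1}) (B : {set gT2}) : {set gT1 * gT2} :=
  [set uv | [&& uv.1 \in A, uv.2 \in B & f1 uv.1 == f2 uv.2]].

(* Main.v *)
Require Import Defs.
From HB Require Import structures.
From mathcomp Require Import all_boot all_order all_algebra all_fingroup all_solvable.
Local Open Scope group_scope.

Lemma expg_pair (gT1 gT2 : finGroupType) (x : gT1 * gT2) n :
  x ^+ n = (x.1 ^+ n, x.2 ^+ n).
Proof. by elim: n => [|n IH] //; rewrite !expgS IH. Qed.
Lemma Z2sq (z : 'Z_2) : z ^+ 2 = 1.
Proof. by have := expg_cardG (in_setT z); rewrite cardsT card_ord. Qed.
Lemma Z4abelem : 2.-abelem [set: 'Z_2 * 'Z_2 * 'Z_2 * 'Z_2].
Proof.
apply: exponent2_abelem; apply/exponentP => [[[[a b] c] d]] _.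
by rewrite !expg_pair /= !Z2sq.
Qed.
Lemma Z2abelem : 2.-abelem [set: 'Z_2 * 'Z_2].
Proof.
apply: exponent2_abelem; apply/exponentP => [[a b]] _.
by rewrite !expg_pair /= !Z2sq.
Qed.
Lemma Z4c : #|[set: 'Z_2 * 'Z_2 * 'Z_2 * 'Z_2]| = 16%N.
Proof. by rewrite cardsT !card_prod card_ord. Qed.
Lemma Z2c : #|[set: 'Z_2 * 'Z_2]| = 4%N.
Proof. by rewrite cardsT !card_prod card_ord. Qed.
Lemma D8Z : #|'Z([set: gsort 'D_8])| = 2%N.
Proof.
have isoG : [set: gsort 'D_8]%G \isog 'D_(2^3) by exact: isog_refl.
have [[x y] gen _] := generators_2dihedral (isT : 1 < 3)%N isoG.
case: (dihedral2_structure (isT : 1 < 3)%N gen isoG) => _ _ _ _ /=.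
by case.
Qed.

Lemma D8card : #|[set: gsort 'D_8]| = 8%N.
Proof. exact: (card_dihedral (isT : 1 < 4)%N). Qed.

Lemma key (K : {group gsort 'D_8}) (u : gsort 'D_8) :
  #|K| = 4%N -> u \notin K -> #|K :&: 'C[u]| <= 2.
Proof.
move=> oK uK.
have cKK : abelian K by apply: (card_p2group_abelian (p:=2)); rewrite ?oK.
have nsub : ~~ (K \subset 'C[u]).
  apply/negP; rewrite sub_cent1 => uC.
  have pr : K \proper 'C(K) by apply/properP; split; [exact: cKK | exists u].
  have lt := proper_card pr.
  have dv : #|'C(K)| %| 8 by have := cardSg (subsetT 'C(K)); rewrite D8card.
  have e8 : #|'C(K)| = 8%N.
    have le8 := dvdn_leq (isT : (0 < 8)%N) dv.
    move: lt dv le8; rewrite oK.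
    by case: #|_| => [|[|[|[|[|[|[|[|[|]]]]]]]]].
  have CT : 'C(K) = [set: gsort 'D_8].
    by apply/eqP; rewrite eqEcard subsetT D8card e8 /=.
  have : K \subset 'Z([set: gsort 'D_8]).
    by rewrite subsetI subsetT /= centsC -CT subxx.
  by move/subset_leq_card; rewrite D8Z oK.
have dv : #|K :&: 'C[u]| %| 4 by have := cardSg (subsetIl K 'C[u]); rewrite oK.
have pr : K :&: 'C[u] \proper K.
  by rewrite properEneq subsetIl andbT; apply: contra nsub => /eqP <-; apply: subsetIr.
have := proper_card pr; rewrite oK.
move: dv; case: #|_| => [|[|[|[|]]]] //.
Qed.

Section Main.
Variables (lam1 lam2 : {morphism [set: gsort 'D_8] >-> 'Z_2}).
Hypothesis hk1 : 'ker lam1 \isog [set: 'Z_2 * 'Z_2].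
Hypothesis hk2 : 'ker lam2 \isog [set: 'Z_2 * 'Z_2].
Let DD := fibprod lam1 lam2 [set: gsort 'D_8] [set: gsort 'D_8].

Let oK1 : #|'ker lam1| = 4%N. Proof. by rewrite (card_isog hk1) Z2c. Qed.
Let oK2 : #|'ker lam2| = 4%N. Proof. by rewrite (card_isog hk2) Z2c. Qed.

Let inker1 x : (x \in 'ker lam1) = (lam1 x == 1).
Proof. by apply/idP/eqP => [/mker //| h]; apply/kerP; rewrite ?inE. Qed.
Let inker2 x : (x \in 'ker lam2) = (lam2 x == 1).
Proof. by apply/idP/eqP => [/mker //| h]; apply/kerP; rewrite ?inE. Qed.

Let inDD (uv : gsort 'D_8 * gsort 'D_8) : (uv \in DD) = (lam1 uv.1 == lam2 uv.2).
Proof. by rewrite /DD /fibprod inE !inE. Qed.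

Let oK : #|setX ('ker lam1) ('ker lam2)| = 16%N.
Proof. by rewrite cardsX oK1 oK2. Qed.

Let sKD : setX ('ker lam1) ('ker lam2) \subset DD.
Proof.
apply/subsetP => -[a b]; rewrite in_setX /= inDD /= inker1 inker2.
by case/andP => /eqP -> /eqP ->.
Qed.

Let abK : 2.-abelem (setX ('ker lam1) ('ker lam2)).
Proof.
have e1 : exponent ('ker lam1) %| 2.
  by move: Z2abelem; rewrite -(isog_abelem hk1) abelemE // => /andP[].
have e2 : exponent ('ker lam2) %| 2.
  by move: Z2abelem; rewrite -(isog_abelem hk2) abelemE // => /andP[].
apply: exponent2_abelem; apply/exponentP => -[a b]; rewrite in_setX /= => /andP[ka kb].
by rewrite expg_pair /= (exponentP e1) // (exponentP e2).
Qed.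

Let uniq_main (H : {group gsort 'D_8 * gsort 'D_8}) :
  H \subset DD -> abelian H -> #|H| = 16%N ->
  H :=: setX ('ker lam1) ('ker lam2).
Proof.
move=> sHD cHH oH.
suff sHK : H \subset setX ('ker lam1) ('ker lam2).
  by apply/eqP; rewrite eqEcard sHK oH oK leqnn.
apply/subsetP => -[u v] Huv.
have Duv := subsetP sHD _ Huv; rewrite inDD /= in Duv.
rewrite in_setX /= !inker1 inker2 -(eqP Duv) andbb.
apply/negPn/negP => u1.
have v1 : lam2 v != 1 by rewrite -(eqP Duv).
pose f := fun x : gsort 'D_8 * gsort 'D_8 => lam1 x.1.
have fM : {in [set: gsort 'D_8 * gsort 'D_8] &, {morph f : x y / x * y}}.
  by move=> x y _ _; rewrite /f /= morphM ?inE.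
pose fm := Morphism fM.
have cf : #|fm @* H| <= 2 by apply: leq_trans (max_card _) _; rewrite card_ord.
have L := Lagrange (subsetIl H ('ker fm)).
have cmf := card_morphim fm H; rewrite setTI in cmf.
rewrite indexgI -cmf oH in L.
have M8 : 8 <= #|H :&: 'ker fm|.
  rewrite -(leq_pmul2r (isT : 0 < 2)%N); apply: leq_trans (leq_mul (leqnn _) cf).
  by rewrite L.
have sM : H :&: 'ker fm \subset
          setX ('ker lam1 :&: 'C[u]) ('ker lam2 :&: 'C[v]).
  apply/subsetP => -[a b] /setIP[Hab kab].
  have fa : lam1 a = 1 by have := mker kab.
  have Dab := subsetP sHD _ Hab; rewrite inDD /= fa in Dab.
  have cm := (centsP cHH) _ Hab _ Huv.
  rewrite in_setX /=; apply/andP; split; apply/setIP; split.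
  - by rewrite inker1 fa.
  - by apply/cent1P; move/(congr1 fst): cm.
  - by rewrite inker2 -(eqP Dab).
  - by apply/cent1P; move/(congr1 snd): cm.
have := subset_leq_card sM; rewrite cardsX.
have c1 : #|'ker lam1 :&: 'C[u]| <= 2 by apply: key; rewrite ?oK1 ?inker1.
have c2 : #|'ker lam2 :&: 'C[v]| <= 2 by apply: key; rewrite ?oK2 ?inker2.
move=> le; have := leq_trans M8 (leq_trans le (leq_mul c1 c2)).
by [].
Qed.

Lemma main_res :
  (exists! H : {group gsort 'D_8 * gsort 'D_8},
      [&& H \subset DD, abelian H & #|H| == 16]) /\
  (forall H : {group gsort 'D_8 * gsort 'D_8},
      H \subset DD -> abelian H -> #|H| = 16 ->
      H :=: setX ('ker lam1) ('ker lam2) /\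
      H \isog [set: 'Z_2 * 'Z_2 * 'Z_2 * 'Z_2]).
Proof.
split.
  exists (setX_group ('ker lam1)%G ('ker lam2)%G); split.
    by rewrite /= sKD (abelem_abelian abK) oK.
  move=> H /and3P[sHD cHH /eqP oH].
  by apply/val_inj; rewrite /= (uniq_main H sHD cHH oH).
move=> H sHD cHH oH; have E := uniq_main H sHD cHH oH; split => //.
rewrite (isog_abelem_card _ (p:=2)).
  by rewrite Z4abelem Z4c oH.
by rewrite E.
Qed.
End Main.

Theorem proposition4p2
  (lam1 lam2 : {morphism [set: gsort 'D_8] >-> 'Z_2})
  (hk1 : 'ker lam1 \isog [set: 'Z_2 * 'Z_2])
  (hk2 : 'ker lam2 \isog [set: 'Z_2 * 'Z_2]) :
  let DD := fibprod lam1 lam2 [set: gsort 'D_8] [set: gsort 'D_8] in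
  (exists! H : {group gsort 'D_8 * gsort 'D_8},
      [&& H \subset DD, abelian H & #|H| == 16]) /\
  (forall H : {group gsort 'D_8 * gsort 'D_8},
      H \subset DD -> abelian H -> #|H| = 16 ->
      H :=: setX ('ker lam1) ('ker lam2) /\
      H \isog [set: 'Z_2 * 'Z_2 * 'Z_2 * 'Z_2]).
Proof. exact: main_res. Qed.
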